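(* Let $X$ be a nonempty set and let $\mathcal{S}_1,\mathcal{S}_2\subseteq\mathcal{P}(X)$ with $\emptyset\in\mathcal{S}_1$ and $\emptyset\in\mathcal{S}_2$. Define $\mathcal{S}_1\cup^{\star}\mathcal{S}_2=\{S_1\cup S_2 : S_1\in\mathcal{S}_1,\ S_2\in\mathcal{S}_2\}$. Then $\triangleleft_{\mathcal{S}_1\cup^{\star}\mathcal{S}_2}=\triangleleft_{\mathcal{S}_1}\cup\triangleleft_{\mathcal{S}_2}$ (as subsets of $X\times X$).
   Context: For $\mathcal{S}\subseteq\mathcal{P}(X)$, $\triangleleft_{\mathcal{S}}$ is the relation $\{(x,y)\in X\times X : \exists S\in\mathcal{S},\ x\in S,\ y\notin S\}$. *)

(* Defs.v *)
Definition sep_rel {X : Type} (F : (X -> Prop) -> Prop) (x y : X) : Prop :=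
  exists S, F S /\ S x /\ ~ S y.

Definition set_union {X : Type} (A B : X -> Prop) : X -> Prop :=
  fun x => A x \/ B x.

Definition set_empty {X : Type} : X -> Prop := fun _ => False.

Definition star_union {X : Type} (F1 F2 : (X -> Prop) -> Prop) : (X -> Prop) -> Prop :=
  fun S => exists S1 S2, F1 S1 /\ F2 S2 /\ (forall x, S x <-> set_union S1 S2 x).

Definition has_empty {X : Type} (F : (X -> Prop) -> Prop) : Prop :=
  exists E, F E /\ forall x, ~ E x.

(* Main.v *)
Require Import Defs.

Theorem proposition2p3 (X : Type) (x0 : X) (F1 F2 : (X -> Prop) -> Prop)
  (h1 : has_empty F1) (h2 : has_empty F2) :
  forall x y : X,
    sep_rel (star_union F1 F2) x y <-> (sep_rel F1 x y \/ sep_rel F2 x y).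
Proof.
  intros x y. destruct h1 as [E1 [HE1 NE1]]. destruct h2 as [E2 [HE2 NE2]].
  unfold sep_rel, star_union, set_union. split.
  - intros [S [[S1 [S2 [H1 [H2 HS]]]] [Hx Hy]]].
    apply HS in Hx. destruct Hx as [Hx|Hx].
    + left. exists S1. repeat split; auto. intro. apply Hy, HS. auto.
    + right. exists S2. repeat split; auto. intro. apply Hy, HS. auto.
  - intros [[S [HS [Hx Hy]]]|[S [HS [Hx Hy]]]].
    + exists (fun z => S z \/ E2 z). split.
      * exists S, E2. repeat split; auto; tauto.
      * split; auto. intros [H|H]; [auto|eapply NE2; eauto].
    + exists (fun z => E1 z \/ S z). split.
      * exists E1, S. repeat split; auto; tauto.
      * split; auto. intros [H|H]; [eapply NE1; eauto|auto].
Qed.
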